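(* Let $k$ be an odd integer with $k\ge 5$, let $D$ be a strong $k$-quasi-transitive digraph with $\mathrm{diam}(D)\ge k+2$, let $u,v\in V(D)$ with $d(u,v)=k+2$, and let $P=x_0x_1\ldots x_{k+2}$ be a shortest $(u,v)$-path (so $x_0=u$, $x_{k+2}=v$). Let $O(P)=\{x_1,x_3,\ldots,x_{k+2}\}$ and $E(P)=\{x_0,x_2,\ldots,x_{k+1}\}$. Let $x_t,x_s\in V(P)$ with $s>t$. Then: (1) every vertex of $O(P)$ is adjacent to every vertex of $E(P)$; i.e. $D[V(P)]$ contains as a subdigraph a semicomplete bipartite digraph with bipartition $(O(P),E(P))$; (2) if $s$ and $t$ have different parity, there is a path of length $k-2$ from $x_s$ to $x_t$ in $D[V(P)]$; moreover, for any two distinct vertices $x,y\in V(D)\setminus V(P)$, if $y\rightarrow x_s$ and $x_t\rightarrow x$, then $x$ and $y$ are adjacent; (3) if $s$ and $t$ have the same parity, there is a path of length $k-1$ from $x_s$ to $x_t$ in $D[V(P)]$; moreover, for any $x\in V(D)\setminus V(P)$: if $x\rightarrow x_s$, then $x$ and $x_t$ are adjacent, and $x\rightarrow x_t$ if $s\ge t+4$; if $x_t\rightarrow x$, then $x$ and $x_s$ are adjacent, and $x_s\rightarrow x$ if $s\ge t+4$.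
   Context: All digraphs are finite, without loops or multiple arcs (opposite arcs allowed). $x\rightarrow y$ means $xy\in A(D)$; $x,y$ are adjacent if $x\rightarrow y$ or $y\rightarrow x$. For $k\ge 2$, $D$ is $k$-quasi-transitive if for every path $x_0x_1\ldots x_k$ of length $k$, $x_0$ and $x_k$ are adjacent. $d(x,y)$ is the length of a shortest $(x,y)$-path, $\mathrm{diam}(D)=\max_{x,y}d(x,y)$. $D[S]$ is the induced subdigraph. A semicomplete bipartite digraph has a bipartition $(X,Y)$ with no arcs inside the parts and every vertex of $X$ adjacent to every vertex of $Y$. *)

(* Defs.v *)
From mathcomp Require Import all_boot.
Set Implicit Arguments. Unset Strict Implicit. Unset Printing Implicit Defensive.

(* A digraph on a finite vertex type V is given by its arc relation A:
   x -> y  iff  A x y.  No loops: A is irreflexive. Opposite arcs allowed. *)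
Definition loopless (V : finType) (A : rel V) : Prop := forall x, ~~ A x x.

Definition adj (V : finType) (A : rel V) (x y : V) : bool := A x y || A y x.

(* A (directed) path is a nonempty duplicate-free sequence of vertices with
   consecutive arcs; its length is (size - 1). *)
Definition dpath (V : finType) (A : rel V) (s : seq V) : bool :=
  [&& s != [::], uniq s & sorted A s].

Definition path_in (V : finType) (A : rel V) (S : pred V) (x y : V) (n : nat) : Prop :=
  exists s : seq V, [/\ dpath A (x :: s), size s = n, last x s = y & all S (x :: s)].

Definition has_path (V : finType) (A : rel V) (x y : V) (n : nat) : Prop :=
  path_in A predT x y n.

Definition k_quasi_transitive (V : finType) (A : rel V) (k : nat) : Prop :=
  forall (x : V) (s : seq V), dpath A (x :: s) -> size s = k -> adj A x (last x s).

Definition strong (V : finType) (A : rel V) : Prop :=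
  forall x y : V, exists n, has_path A x y n.

Definition is_dist (V : finType) (A : rel V) (x y : V) (n : nat) : Prop :=
  has_path A x y n /\ forall m, has_path A x y m -> n <= m.

Definition diam_ge (V : finType) (A : rel V) (m : nat) : Prop :=
  exists x y n, is_dist A x y n /\ m <= n.

(* Main.v *)
Require Import Defs.
From mathcomp Require Import all_boot zify.
Set Implicit Arguments. Unset Strict Implicit. Unset Printing Implicit Defensive.

Section S.
Variables (V : finType) (A : rel V) (k : nat) (u v : V) (P : seq V).
Hypotheses (Hk : 5 <= k) (Hkq : k_quasi_transitive A k)
  (Hd : is_dist A u v (k + 2)) (HP : dpath A P) (Hs : size P = k + 3)
  (Hh : head u P = u) (Hl : last u P = v) (Hodd : odd k).

Definition X i := nth u P i.
Definition R i j := A (X i) (X j).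

Lemma P_cons : P = u :: behead P.
Proof. move: Hs Hh; case: P => [|y P'] /= H1 H2; [lia | by rewrite H2]. Qed.

Lemma sP' : size (behead P) = k.+2.
Proof. rewrite size_behead Hs; lia. Qed.

Lemma uP : uniq P.
Proof. by case/and3P: HP. Qed.

Lemma pathP' : path A u (behead P).
Proof. by case/and3P: HP => _ _; rewrite {1}P_cons. Qed.

Lemma F0 i : i < k.+2 -> R i i.+1.
Proof.
move=> hi; have := pathP'; move/(pathP u) => H.
have := H i; rewrite sP' => /(_ hi).
rewrite /R /X -P_cons; suff -> : nth u (behead P) i = nth u P i.+1 by [].
by rewrite {2}P_cons.
Qed.

Lemma last_take_P m : m <= k.+2 -> last u (take m (behead P)) = X m.
Proof.
move=> hm; case: m hm => [|m] hm; first by rewrite take0 /X P_cons.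
rewrite -nth_last size_takel ?sP' // nth_take //.
by rewrite /X {2}P_cons.
Qed.

Lemma XinP i : i < k + 3 -> X i \in P.
Proof. by move=> hi; apply: mem_nth; rewrite Hs. Qed.

Lemma SC i j w : i < j -> j <= k.+2 -> uniq w -> all (fun y => y \notin P) w ->
  path A (X i) (w ++ [:: X j]) -> j <= i + size w + 1.
Proof.
move=> lij ljn uw nw pw.
case: Hd => _ Hmin.
set s := take i (behead P) ++ w ++ drop j P.
suff : k + 2 <= size s.
  rewrite /s !size_cat size_takel ?sP'; last lia.
  rewrite size_drop Hs.
set sw := size w; lia.
apply: (Hmin (size s)); exists s; split => //.
3: exact: all_predT.
- apply/and3P; split => //.
  + have -> : u :: s = take i.+1 P ++ w ++ drop j P.
      by rewrite {1}P_cons /s.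
    rewrite uniq_catCA cat_uniq uw /=.
    have usub : uniq (take i.+1 P ++ drop j P).
      apply: (subseq_uniq _ uP).
      rewrite -{3}(cat_take_drop i.+1 P).
      apply: cat_subseq => //.
      have -> : drop j P = drop (j - i.+1) (drop i.+1 P) by rewrite drop_drop; congr drop; lia.
      exact: drop_subseq.
    rewrite usub andbT.
    apply/hasPn => y yin.
    apply/negP => yw.
    have : y \notin P by move/allP: nw => /(_ y yw).
    rewrite -(cat_take_drop i.+1 P) mem_cat.
    rewrite mem_cat in yin; case/orP: yin => yin; first by rewrite yin.
    move/negP; apply; apply/orP; right.
    have E : drop j P = drop (j - i.+1) (drop i.+1 P) by rewrite drop_drop; congr drop; lia.
    rewrite E in yin; exact: (mem_drop yin).
  + rewrite /= /s cat_path; apply/andP; split.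
    * have := pathP'; rewrite -{1}(cat_take_drop i (behead P)) cat_path.
      by case/andP.
    * rewrite last_take_P; last lia.
      rewrite (drop_nth u); last by rewrite Hs; lia.
      have -> : w ++ nth u P j :: drop j.+1 P = (w ++ [:: X j]) ++ drop j.+1 P.
        by rewrite -catA.
      rewrite cat_path pw /= last_cat /=.
      have := pathP'; rewrite -{1}(cat_take_drop j (behead P)) cat_path.
      case/andP => _; rewrite last_take_P; last lia.
      by rewrite -drop1 drop_drop addn1.
- have E1 : last u (take j.+1 P) = X j by rewrite {1}P_cons /= last_take_P.
  have E2 : v = last (X j) (drop j.+1 P).
    by rewrite -Hl -{1}(cat_take_drop j.+1 P) last_cat E1.
  rewrite E2 /s !last_cat (drop_nth u); last by rewrite Hs; lia.
  by [].
Qed.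

Lemma NS i j : i + 2 <= j -> j <= k.+2 -> ~~ R i j.
Proof.
move=> h1 h2; apply/negP => Hij.
have := @SC i j [::] ltac:(lia) h2 isT isT.
move: Hij; rewrite /R => Hij.
by rewrite /= Hij => /(_ isT) /=; lia.
Qed.

Lemma back a b : adj A (X a) (X b) -> a + 2 <= b -> b <= k.+2 -> R b a.
Proof.
move=> /orP [H|H] h1 h2 //.
by have := NS h1 h2; rewrite /R H.
Qed.

Lemma adjC a b : adj A a b = adj A b a.
Proof. by rewrite /adj orbC. Qed.

Fixpoint okL (l h : nat) (L : seq (nat * nat)) : Prop :=
  match L with
  | [::] => l <= h <= k.+2
  | (l', h') :: L' => [/\ l <= h <= k.+2, h' < l, R h l' & okL l' h' L']
  end.

Definition ip (l h : nat) (L : seq (nat * nat)) : seq nat :=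
  iota l (h - l).+1 ++ flatten [seq iota p.1 (p.2 - p.1).+1 | p <- L].

Fixpoint lastH (h : nat) (L : seq (nat * nat)) : nat :=
  match L with [::] => h | (_, h') :: L' => lastH h' L' end.

Lemma iota_path l m : l + m <= k.+2 -> path R l (iota l.+1 m).
Proof.
elim: m l => [|m IH] l hl //=.
rewrite F0 /=; last lia.
apply: IH; lia.
Qed.

Lemma last_iota l m : last l (iota l.+1 m) = l + m.
Proof. by elim: m l => [|m IH] l /=; [rewrite addn0 | rewrite IH; lia]. Qed.

Lemma ip_props l h L : okL l h L ->
  [/\ sorted R (ip l h L), uniq (ip l h L), all (fun i => i <= h) (ip l h L)
    & last l (ip l h L) = lastH h L].
Proof.
elim: L l h => [|[l' h'] L IH] l h.
  move=> /= /andP [h1 h2]; rewrite /ip /= cats0.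
  split.
  - apply: iota_path; lia.
  - exact: (iota_uniq l (h - l).+1).
  - rewrite h1 /=; apply/allP => i; rewrite mem_iota; lia.
  - rewrite last_iota; lia.
case=> /andP [h1 h2] h3 h4 /IH [s1 u1 a1 l1].
have E : ip l h ((l', h') :: L) = iota l (h - l).+1 ++ ip l' h' L by [].
rewrite E; split.
- rewrite /= cat_path iota_path /=; last lia.
  rewrite last_iota (_ : l + (h - l) = h); last lia.
  move: s1; rewrite /ip /= => ->; by rewrite h4 ?andbT.
- rewrite cat_uniq iota_uniq u1 andbT.
  apply/hasPn => i iin; rewrite mem_iota; move/allP: a1 => /(_ i iin); lia.
- rewrite all_cat; apply/andP; split; apply/allP => i.
    rewrite mem_iota; lia.
  move/allP: a1 => H /H; lia.
- rewrite last_cat; move: l1; rewrite /ip /= !last_cat /= => <-.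
  by [].
Qed.

Lemma ip_path l h L m : okL l h L -> (size (ip l h L)).-1 = m ->
  path_in A (mem P) (X l) (X (lastH h L)) m.
Proof.
move=> ok <-; have [s1 u1 a1 l1] := ip_props ok.
have E : ip l h L = l :: (iota l.+1 (h - l) ++ flatten [seq iota p.1 (p.2 - p.1).+1 | p <- L]) by [].
move: s1 u1 a1 l1; rewrite E; set r := (iota _ _ ++ _) => s1 u1 a1 l1.
have hh : h <= k.+2 by case: L {E r s1 u1 a1 l1} ok => [/andP[]|[? ?] ? []/andP[]].
exists (map X r); split.
- rewrite /dpath -[X l :: _]/(map X (l :: r)); apply/and3P; split => //.
  + rewrite map_inj_in_uniq // => i j iin jin /eqP.
    move/allP: a1 => a1.
    have := a1 _ iin; have := a1 _ jin => hj hi.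
    rewrite /X nth_uniq ?uP ?Hs //; [by move/eqP | lia | lia].
  + by rewrite sorted_map.
- by rewrite size_map.
- by rewrite last_map -l1.
- apply/allP => y; rewrite -[X l :: _]/(map X (l :: r)) => /mapP [i iin ->].
  apply: XinP; move/allP: a1 => /(_ i iin); lia.
Qed.

Lemma kq_adj a b : path_in A (mem P) (X a) (X b) k -> adj A (X a) (X b).
Proof. by case=> s [ds ss <- _]; apply: Hkq. Qed.

Lemma ip_back l h L : okL l h L -> (size (ip l h L)).-1 = k ->
  lastH h L + 2 <= l -> l <= k.+2 -> R l (lastH h L).
Proof.
move=> ok sz h1 h2; apply: back => //; rewrite adjC; apply: kq_adj.
exact: ip_path ok sz.
Qed.

Lemma halfE n : n = 2 * n./2 + odd n.
Proof. by rewrite -[n in LHS]odd_double_half -muln2 addnC mulnC. Qed.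

Lemma kK : exists K, k = 2 * K + 1.
Proof. exists k./2; have := halfE k; rewrite Hodd; lia. Qed.

Ltac szt := rewrite /ip /= ?cats0; do 4 (rewrite ?size_cat ?size_iota /=); lia.

Lemma A1 j i : j = i + k -> i <= 2 -> R j i.
Proof.
move=> -> hi; apply: back; [|lia|lia]; apply: kq_adj.
apply: (ip_path (L := [::])) => /=; [lia | szt].
Qed.

Lemma A2 : R k.+2 0.
Proof.
apply: (ip_back (h := k.+2) (L := [:: (2, k); (0, 0)])) => /=; [|szt|lia|lia].
split; [lia | lia | apply: A1; lia | ].
split; [lia | lia | apply: A1; lia | lia].
Qed.

Lemma A3 j i : j = i + 3 -> j <= k.+2 -> R j i.
Proof.
move=> hj hjn.
apply: (ip_back (h := k.+2) (L := [:: (0, i)])) => /=; [|szt|lia|lia].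
split; [lia | lia | apply: A2 | lia].
Qed.

Lemma B j p : j = 2 * p + 3 -> j <= k.+2 -> R j 0.
Proof.
elim: p j => [|p IH] j hj hjn; first by apply: A3; lia.
apply: (ip_back (h := k.+2) (L := [:: (2, 2 * p + 3); (0, 0)])) => /=; [|szt|lia|lia].
split; [lia | lia | apply: A1; lia | ].
split; [lia | lia | apply: IH; lia | lia].
Qed.

Lemma T r m : m + 2 * r = k - 1 -> R k.+2 m.
Proof.
elim: r m => [|r IH] m hm; first by apply: A3; lia.
apply: (ip_back (h := k.+2) (L := [:: (m + 2, k); (0, m)])) => /=; [|szt|lia|lia].
split; [lia | lia | apply: IH; lia | ].
split; [lia | lia | apply: A1; lia | lia].
Qed.

Lemma G j i q : j = i + 2 * q + 3 -> j <= k.+2 -> R j i.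
Proof.
move=> hj hjn; have [K hK] := kK.
case: q hj => [|q] hj; first by apply: A3; lia.
have hi := halfE i; case: (odd i) hi => /= hi.
- apply: (ip_back (h := k.+2) (L := [:: (i + 1, j - 3); (0, i)])) => /=; [|szt|lia|lia].
  split; [lia | lia | apply: (T (r := K - i./2 - 1)); lia | ].
  split; [lia | lia | apply: (B (p := i./2 + q)); lia | lia].
- apply: (ip_back (h := k.+2) (L := [:: (i + 2, j - 2); (0, i)])) => /=; [|szt|lia|lia].
  split; [lia | lia | apply: (T (r := K - i./2 - 1)); lia | ].
  split; [lia | lia | apply: (B (p := i./2 + q)); lia | lia].
Qed.

Lemma halfE2 n : n = 2 * n./2 \/ n = 2 * n./2 + 1.
Proof. have := halfE n; case: (odd n) => /=; lia. Qed.

Lemma C1 i j : i < k + 3 -> j < k + 3 -> odd i -> ~~ odd j -> adj A (X i) (X j).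
Proof.
move=> hi hj oi ej.
have ei := halfE i; have ej' := halfE j; rewrite oi /= in ei; rewrite (negbTE ej) /= in ej'.
case: (ltnP i j) => hij.
- case: (eqVneq j i.+1) => [-> | ne]; first by apply/orP; left; apply: F0; lia.
  apply/orP; right; apply: (G (q := j./2 - i./2 - 2)); lia.
- case: (eqVneq i j.+1) => [-> | ne]; first by apply/orP; right; apply: F0; lia.
  apply/orP; left; apply: (G (q := i./2 - j./2 - 1)); lia.
Qed.

Lemma C2 s t : t < s -> s < k + 3 -> odd s != odd t ->
  path_in A (mem P) (X s) (X t) (k - 2).
Proof.
move=> hts hs hp; have [K hK] := kK.
have [q hq] : exists q, s = t + 2 * q + 1.
  have es := halfE s; have et := halfE t; move: es et hp.
  case: (odd s); case: (odd t) => //= es et _;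
    [exists (s./2 - t./2) | exists (s./2 - t./2 - 1)]; lia.
have ht := halfE2 t.
case: (leqP q 2) => hq2.
- case: (leqP (t + (k + 2 * q - 2)) k.+2) => hJ.
  + apply: (ip_path (h := t + (k + 2 * q - 2)) (L := [:: (t, t)])) => /=; [|szt].
    split; [lia | lia | apply: (G (q := K + q - 2)); lia | lia].
  + apply: (ip_path (h := k.+2) (L := [:: (k.+2 - (k + 2 * q - 2), t)])) => /=; [|szt].
    split; [lia | lia | apply: (G (q := K + q - 2)); lia | lia].
- apply: (ip_path (h := k.+2)
     (L := [:: (2 * t./2 + 2, 2 * (t./2 + q - 3) + 3); (0, t)])) => /=; [|szt].
  split; [lia | lia | apply: (G (q := K - t./2 - 1)); lia | ].
  split; [lia | lia | apply: (G (q := t./2 + q - 3)); lia | lia].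
Qed.

Lemma C3 s t : t < s -> s < k + 3 -> odd s = odd t ->
  path_in A (mem P) (X s) (X t) (k - 1).
Proof.
move=> hts hs hp; have [K hK] := kK.
have [q hq] : exists q, s = t + 2 * q + 2.
  have es := halfE s; have et := halfE t; move: es et hp.
  case: (odd s); case: (odd t) => //= es et _;
    exists (s./2 - t./2 - 1); lia.
have ht := halfE2 t.
case: (leqP q 1) => hq2.
- case: (leqP (t + (k + 2 * q)) k.+2) => hJ.
  + apply: (ip_path (h := t + (k + 2 * q)) (L := [:: (t, t)])) => /=; [|szt].
    split; [lia | lia | apply: (G (q := K + q - 1)); lia | lia].
  + apply: (ip_path (h := k.+2) (L := [:: (k.+2 - (k + 2 * q), t)])) => /=; [|szt].
    split; [lia | lia | apply: (G (q := K + q - 1)); lia | lia].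
- case: (posnP t) => ht0.
  + apply: (ip_path (h := k.+1) (L := [:: (1, s - 3); (0, t)])) => /=; [|szt].
    split; [lia | lia | apply: (G (q := K - 1)); lia | ].
    split; [lia | lia | apply: (G (q := q - 2)); lia | lia].
  + apply: (ip_path (h := k.+2)
       (L := [:: (2 * t./2 + 2, 2 * t./2 + 2 * q); (1, t)])) => /=; [|szt].
    split; [lia | lia | apply: (G (q := K - t./2 - 1)); lia | ].
    split; [lia | lia | apply: (G (q := t./2 + q - 2)); lia | lia].
Qed.

Lemma notin_w (w : seq V) y : all (mem P) w -> y \notin P -> y \notin w.
Proof. by move=> /allP al; apply: contra => /al. Qed.

Lemma M2 s t a b : t < s -> s < k + 3 -> odd s != odd t ->
  a \notin P -> b \notin P -> a != b -> A b (X s) -> A (X t) a -> adj A a b.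
Proof.
move=> hts hs hp na nb nab hb ha.
have [sq [dp sz lst al]] := C2 hts hs hp.
move: dp => /and3P [_ u1 s1].
have {}s1 : path A (X s) sq := s1.
set w := (X s :: sq) ++ [:: a].
have ua : uniq w by rewrite /w cats1 rcons_uniq u1 andbT (notin_w al na).
have nb' : b \notin w.
  by rewrite /w cats1 mem_rcons inE negb_or eq_sym nab (notin_w al nb).
have dw : dpath A (b :: w).
  apply/and3P; split => //; first by rewrite cons_uniq nb' ua.
  rewrite /= hb /= cat_path s1 lst /= ha //.
have lw : last b w = a by rewrite /w last_cat.
rewrite adjC -lw; apply: (Hkq dw); rewrite /w size_cat /= sz; move: Hk; clear; lia.
Qed.

Lemma M3 s t a : t < s -> s < k + 3 -> odd s = odd t -> a \notin P ->
  (A a (X s) -> adj A a (X t) /\ (t + 4 <= s -> A a (X t))) /\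
  (A (X t) a -> adj A a (X s) /\ (t + 4 <= s -> A (X s) a)).
Proof.
move=> hts hs hp na.
have [sq [dp sz lst al]] := C3 hts hs hp.
move: (dp) => /and3P [_ u1 s1].
have {}s1 : path A (X s) sq := s1.
have na' := notin_w al na.
split => H.
- have dw : dpath A (a :: X s :: sq).
    apply/and3P; split => //; first by rewrite cons_uniq na' u1.
    by rewrite /= H.
  have adjt : adj A a (X t).
    rewrite -lst -[last _ _]/(last a (X s :: sq)); apply: (Hkq dw); rewrite /= sz; move: Hk; clear; lia.
  split => // h4; case/orP: adjt => // H2.
  have := @SC t s [:: a] hts (ltac:(move: hs; clear; lia)) isT (ltac:(by rewrite /= na)).
  by rewrite /= H2 H => /(_ isT); move: h4; clear; lia.
- set w := sq ++ [:: a].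
  have dw : dpath A (X s :: w).
    apply/and3P; split => //.
      by rewrite /w -cat_cons cats1 rcons_uniq u1 andbT na'.
    by rewrite /= cat_path s1 /= lst H.
  have adjs : adj A (X s) a.
    have lw : last (X s) w = a by rewrite /w last_cat.
    rewrite -lw; apply: (Hkq dw); rewrite /w size_cat sz /=; move: Hk; clear; lia.
  rewrite adjC; split => // h4; case/orP: adjs => // H2.
  have := @SC t s [:: a] hts (ltac:(move: hs; clear; lia)) isT (ltac:(by rewrite /= na)).
  by rewrite /= H H2 => /(_ isT); move: h4; clear; lia.
Qed.
End S.

Unset Implicit Arguments.
Set Strict Implicit.

Theorem lemma2p3 (V : finType) (A : rel V) (k : nat) (u v : V) (P : seq V) :
  loopless A -> odd k -> 5 <= k ->
  strong A -> k_quasi_transitive A k -> diam_ge A (k + 2) ->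
  is_dist A u v (k + 2) ->
  dpath A P -> size P = k + 3 -> head u P = u -> last u P = v ->
  let x := fun i => nth u P i in
  (* (1) *)
  (forall i j, i < k + 3 -> j < k + 3 -> odd i -> ~~ odd j -> adj A (x i) (x j)) /\
  (forall t s, t < s -> s < k + 3 ->
     (* (2) *)
     (odd s != odd t ->
        path_in A (mem P) (x s) (x t) (k - 2) /\
        (forall a b : V, a \notin P -> b \notin P -> a != b ->
           A b (x s) -> A (x t) a -> adj A a b)) /\
     (* (3) *)
     (odd s = odd t ->
        path_in A (mem P) (x s) (x t) (k - 1) /\
        (forall a : V, a \notin P ->
           (A a (x s) -> adj A a (x t) /\ (t + 4 <= s -> A a (x t))) /\
           (A (x t) a -> adj A a (x s) /\ (t + 4 <= s -> A (x s) a))))).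
Proof.
move=> _ Hodd Hk _ Hkq _ Hd HP Hs Hh Hl x.
split.
  move=> i j hi hj oi ej; exact: (C1 Hk Hkq Hd HP Hs Hh Hl Hodd hi hj oi ej).
move=> t s hts hs; split => hp; split.
- exact: (C2 Hk Hkq Hd HP Hs Hh Hl Hodd hts hs hp).
- move=> a b na nb nab hb ha; exact: (M2 Hk Hkq Hd HP Hs Hh Hl Hodd hts hs hp na nb nab hb ha).
- exact: (C3 Hk Hkq Hd HP Hs Hh Hl Hodd hts hs hp).
- move=> a na; exact: (M3 Hk Hkq Hd HP Hs Hh Hl Hodd hts hs hp na).
Qed.
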